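(* Let $\alpha \in [0,1)$ and $k \in \{0,\dots,m-1\}$, and let $\mathbf{S}_k = (S_k,\dots,S_k)$. For every monotone total order $T$ on $\Omega$, $$B_{T_h}^*(\mathbf{S}_k) \le B_T^*(\mathbf{S}_k) \le B_{T_\ell}^*(\mathbf{S}_k);$$ that is, among all pessimal bounds $B_T^*$ for monotone total orders $T$, the value at $\mathbf{S}_k$ is lowest for $T = T_h$ and highest for $T = T_\ell$.
   Context: Fix integers $m \ge 2$, $n \ge 1$ and reals $S_{\min} < S_{\max}$; $S = \{S_0,\dots,S_{m-1}\}$ with $S_k = S_{\min} + k\frac{S_{\max}-S_{\min}}{m-1}$. $\mathcal{F}$ is the set of probability distributions on $S$, identified with the probability simplex in $\mathbb{R}^m$ with the Euclidean topology; $E[F]$ is the mean. $\Omega$ is the set of samples of size $n$ from $S$, identified with their sorted versions $x_{(1)} \le \dots \le x_{(n)}$. $P_F[\Omega']$ is the probability that the sorted sample of $n$ i.i.d. draws from $F$ lies in $\Omega' \subseteq \Omega$; $\mathcal{G}(\Omega',\alpha) = \{F : P_F[\Omega'] > \alpha\}$ and $\mathcal{F}(\Omega',\alpha)$ is its closure. For a total order $T$ on $\Omega$, $\Omega(\mathbf{x},T) = \{\mathbf{y} : \mathbf{x} \le_T \mathbf{y}\}$ and the pessimal (conditionally optimal) bound is $B_T^*(\mathbf{x}) = \min\{E[F] : F \in \mathcal{F}(\Omega(\mathbf{x},T),\alpha)\}$ (standing assumption: the sets involved are nonempty). $\mathbf{x} \le \mathbf{y}$ means $x_{(j)} \le y_{(j)}$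 for all $j$; $T$ is monotone if $\mathbf{x} \le \mathbf{y}$ implies $\mathbf{x} \le_T \mathbf{y}$. $T_\ell$ (low lexicographic): $\mathbf{x} \le_{T_\ell} \mathbf{y}$ iff $\mathbf{x}=\mathbf{y}$ or at the smallest index $j$ with $x_{(j)} \ne y_{(j)}$ we have $x_{(j)} < y_{(j)}$. $T_h$ (high lexicographic): same with the largest such index. *)

(* Defs.v *)
From mathcomp Require Import all_boot all_order all_algebra.
From mathcomp Require Import all_classical all_reals all_analysis.
Set Implicit Arguments. Unset Strict Implicit. Unset Printing Implicit Defensive.
Import Order.TTheory GRing.Theory Num.Theory.
Import numFieldTopology.Exports numFieldNormedType.Exports.
Local Open Scope ring_scope.
Local Open Scope classical_set_scope.

(* The order on indices 'I_m (S_k is strictly increasing in k). *)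
Definition ordle (m : nat) (a b : 'I_m) : bool := (a <= b)%N.

Lemma ordle_total (m : nat) : total (@ordle m).
Proof. by move=> a b; rewrite /ordle leq_total. Qed.

Definition Spt (R : realType) (m : nat) (Smin Smax : R) (k : 'I_m) : R :=
  Smin + (k : nat)%:R * ((Smax - Smin) / (m.-1)%:R).

(* Omega: samples of size n from S, identified with their sorted versions;
   a sample is recorded through the indices of its points in S. *)
Definition Omega (m n : nat) := {t : n.-tuple 'I_m | sorted (@ordle m) t}.

Definition sortO (m n : nat) (t : n.-tuple 'I_m) : Omega m n :=
  exist _ (sort_tuple (@ordle m) t) (sort_sorted (@ordle_total m) t).

Definition xval (R : realType) (m n : nat) (Smin Smax : R)
  (x : Omega m n) (j : 'I_n) : R := Spt Smin Smax (tnth (sval x) j).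

Lemma nseq_sorted (m n : nat) (k : 'I_m) : sorted (@ordle m) (nseq_tuple n k).
Proof.
rewrite /=; elim: n => [|n IH] //=; case: n IH => //= n ->.
by rewrite /ordle leqnn.
Qed.

Definition constO (m n : nat) (k : 'I_m) : Omega m n :=
  exist _ (nseq_tuple n k) (nseq_sorted n k).

Definition is_distr (R : realType) (m : nat) (F : 'rV[R]_m) : Prop :=
  (forall i, 0 <= F 0 i) /\ \sum_i F 0 i = 1.

Definition mean (R : realType) (m : nat) (Smin Smax : R) (F : 'rV[R]_m) : R :=
  \sum_i F 0 i * Spt Smin Smax i.

Definition probO (R : realType) (m n : nat) (F : 'rV[R]_m)
  (A : pred (Omega m n)) : R :=
  \sum_(t : n.-tuple 'I_m | sortO t \in A) \prod_(j < n) F 0 (tnth t j).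

Definition Gset (R : realType) (m n : nat) (A : pred (Omega m n)) (alpha : R)
  : set 'rV[R]_m := [set F | is_distr F /\ alpha < probO F A].

Definition Fset (R : realType) (m n : nat) (A : pred (Omega m n)) (alpha : R)
  : set 'rV[R]_m := closure (Gset A alpha).

Definition OmegaT (m n : nat) (T : rel (Omega m n)) (x : Omega m n)
  : pred (Omega m n) := fun y => T x y.

(* Pessimal bound B_T^*(x) = min { E[F] : F in F(Omega(x,T), alpha) }
   (the minimum exists: closed bounded set, continuous mean; written as inf). *)
Definition Bstar (R : realType) (m n : nat) (Smin Smax alpha : R)
  (T : rel (Omega m n)) (x : Omega m n) : R :=
  inf [set mean Smin Smax F | F in Fset (OmegaT T x) alpha].

Definition total_order (m n : nat) (T : rel (Omega m n)) : Prop :=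
  [/\ reflexive T, antisymmetric T, transitive T & total T].

Definition monotone_order (R : realType) (m n : nat) (Smin Smax : R)
  (T : rel (Omega m n)) : Prop :=
  forall x y : Omega m n,
    (forall j, xval Smin Smax x j <= xval Smin Smax y j) -> T x y.

Definition Tlow (R : realType) (m n : nat) (Smin Smax : R) : rel (Omega m n) :=
  fun x y => (x == y) ||
    [exists j : 'I_n,
       [forall i : 'I_n, (i < j)%N ==> (xval Smin Smax x i == xval Smin Smax y i)]
       && (xval Smin Smax x j < xval Smin Smax y j)].

Definition Thigh (R : realType) (m n : nat) (Smin Smax : R) : rel (Omega m n) :=
  fun x y => (x == y) ||
    [exists j : 'I_n,
       [forall i : 'I_n, (j < i)%N ==> (xval Smin Smax x i == xval Smin Smax y i)]
       && (xval Smin Smax x j < xval Smin Smax y j)].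

(* Main.v *)
Require Import Defs.
From mathcomp Require Import all_boot all_order all_algebra.
From mathcomp Require Import all_classical all_reals all_analysis.
Import Order.TTheory GRing.Theory Num.Theory.
Import numFieldTopology.Exports numFieldNormedType.Exports.
Local Open Scope ring_scope.
Local Open Scope classical_set_scope.

Section Aux.
Variables (R : realType) (m n : nat) (Smin Smax : R).
Hypotheses (hm : (2 <= m)%N) (hS : Smin < Smax).

Let d := (Smax - Smin) / (m.-1)%:R.
Lemma d_gt0 : 0 < d.
Proof. by rewrite /d divr_gt0 ?subr_gt0 // ltr0n; case: (m) hm => [|[|]]. Qed.

Lemma Spt_le (a b : 'I_m) : (Spt Smin Smax a <= Spt Smin Smax b) = (a <= b)%N.
Proof. by rewrite /Spt lerD2l ler_pM2r ?d_gt0 // ler_nat. Qed.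
Lemma Spt_lt (a b : 'I_m) : (Spt Smin Smax a < Spt Smin Smax b) = (a < b)%N.
Proof. by rewrite /Spt ltrD2l ltr_pM2r ?d_gt0 // ltr_nat. Qed.
Lemma Spt_eq (a b : 'I_m) : (Spt Smin Smax a == Spt Smin Smax b) = (a == b).
Proof. by rewrite eq_le !Spt_le -eqn_leq. Qed.
Lemma Spt_ge (a : 'I_m) : Smin <= Spt Smin Smax a.
Proof. by rewrite /Spt lerDl mulr_ge0 // ltW // d_gt0. Qed.

Lemma Osorted (y : Omega m n) (i j : 'I_n) : (i <= j)%N ->
  (tnth (sval y) i <= tnth (sval y) j)%N.
Proof.
move=> ij; rewrite (tnth_nth (tnth (sval y) i)) (tnth_nth (tnth (sval y) i) _ j).
apply: (sorted_leq_nth (leT:=@ordle m)); rewrite ?inE ?size_tuple //.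
all: first [exact: (proj2_sig y) | by move=> a b c; rewrite /ordle; apply: leq_trans | by move=> a; rewrite /ordle].
Qed.

Lemma mean_cont : continuous (fun F : 'rV[R]_m => mean Smin Smax F).
Proof.
have -> : (fun F : 'rV[R]_m => mean Smin Smax F) =
   \sum_i (fun F : 'rV[R]_m => F 0 i * Spt Smin Smax i).
  by apply: funext => F; rewrite fct_sumE.
elim/big_ind: _ => //.
- by move=> x; exact: cst_continuous.
- by move=> f g cf cg x; apply: continuousD; [exact: cf|exact: cg].
- move=> i _ x.
  apply: (@continuousM R _ (fun F : 'rV[R]_m => F 0 i) (fun _ => Spt Smin Smax i)).
    exact: coord_continuous.
  exact: cst_continuous.
Qed.


Lemma probO_mono (F : 'rV[R]_m) (A B : pred (Omega m n)) :
  (forall i, 0 <= F 0 i) -> (forall y, A y -> B y) -> probO F A <= probO F B.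
Proof.
move=> F0 AB; rewrite /probO [X in X <= _]big_mkcond [X in _ <= X]big_mkcond /=.
apply: ler_sum => t _; case: ifP => At.
  by rewrite ifT //; move: At; rewrite !unfold_in; apply: AB.
by case: ifP => // _; apply: prodr_ge0 => j _; exact: F0.
Qed.

Lemma Fset_mono (A B : pred (Omega m n)) (alpha : R) :
  (forall y, A y -> B y) -> Fset A alpha `<=` Fset B alpha.
Proof.
move=> AB; apply: closureS => F [[F0 F1] h]; split; first by split.
apply: (lt_le_trans h); exact: (@probO_mono F A B F0 AB).
Qed.

Lemma Fset_lb (A : pred (Omega m n)) (alpha : R) F :
  Fset A alpha F -> Smin <= mean Smin Smax F.
Proof.
set C := [set F : 'rV[R]_m | Smin <= mean Smin Smax F].
have cl : closed C.
  apply: (@preimage_closed _ _ (fun F : 'rV[R]_m => mean Smin Smax F)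
     [set x | Smin <= x]); last exact: closed_ge.
  by move=> x _; exact: mean_cont.
move=> hF; suff : C F by [].
rewrite ((closure_id C).1 cl); apply: (closureS _ hF).
move=> G [[G0 G1] _]; rewrite /C /= /mean.
rewrite -[X in X <= _]mul1r -G1 mulr_suml.
by apply: ler_sum => i _; rewrite ler_wpM2l ?G0 ?Spt_ge.
Qed.

Variable k : 'I_m.
Hypothesis hn : (1 <= n)%N.

Lemma xval_const j : xval Smin Smax (constO n k) j = Spt Smin Smax k.
Proof. by rewrite /xval /= tnth_nseq. Qed.

Lemma low_sub (T : rel (Omega m n)) : monotone_order Smin Smax T ->
  forall y, Tlow Smin Smax (constO n k) y -> T (constO n k) y.
Proof.
move=> mon y /orP[/eqP<-|]; first by apply: mon => j.
case/existsP=> j /andP[/forallP eqs lt]; apply: mon => i.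
rewrite xval_const /xval Spt_le.
pose o0 : 'I_n := Ordinal hn.
apply: (@leq_trans (tnth (sval y) o0)); last exact: Osorted.
rewrite xval_const /xval Spt_lt in lt.
case: (posnP j) => [j0|jpos].
  have -> : o0 = j by apply: val_inj; rewrite /= j0.
  exact: ltnW.
move: (eqs o0); rewrite /= jpos /= xval_const /xval Spt_eq => /eqP ->.
exact: leqnn.
Qed.

Lemma sub_high (T : rel (Omega m n)) : total_order T ->
  monotone_order Smin Smax T ->
  forall y, T (constO n k) y -> Thigh Smin Smax (constO n k) y.
Proof.
move=> [_ anti _ _] mon y Txy; rewrite /Thigh.
have [->|ne] := eqVneq (constO n k) y; first by apply/orP; left.
have hl : (n.-1 < n)%N by rewrite prednK.
pose ol : 'I_n := Ordinal hl.
case: (ltnP k (tnth (sval y) ol)) => h.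
  apply/orP; right; apply/existsP; exists ol; apply/andP; split.
    apply/forallP => i; apply/implyP => /= hi.
    by exfalso; move: (leq_ltn_trans hi (ltn_ord i)); rewrite prednK // ltnn.
  by rewrite xval_const /xval Spt_lt.
have Tyx : T y (constO n k).
  apply: mon => j; rewrite xval_const /xval Spt_le.
  apply: leq_trans h; apply: Osorted => /=.
  by rewrite -ltnS prednK.
by move: (anti _ _ (introT andP (conj Txy Tyx))) ne => ->; rewrite eqxx.
Qed.

Lemma low_nonempty (alpha : R) : alpha < 1 ->
  Fset (OmegaT (Tlow Smin Smax) (constO n k)) alpha !=set0.
Proof.
move=> a1.
pose F0 : 'rV[R]_m := \row_i ((i == k)%:R : R).
exists F0; apply: subset_closure; split.
  split; first by move=> i; rewrite mxE ler0n.
  under eq_bigr do rewrite mxE.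
  by rewrite (bigD1 k) //= eqxx big1 ?addr0 // => i /negbTE ->.
have so : sortO (nseq_tuple n k) = constO n k.
  apply: val_inj; apply: val_inj => /=.
  apply: sorted_sort; last exact: nseq_sorted.
  by move=> a b c; rewrite /ordle; apply: leq_trans.
rewrite /probO (bigD1 (nseq_tuple n k)) /=; last first.
  by rewrite so unfold_in /OmegaT /Tlow eqxx.
rewrite big1 => [|j _]; last by rewrite tnth_nseq mxE eqxx.
apply: (lt_le_trans a1); rewrite lerDl; apply: sumr_ge0 => t _.
by apply: prodr_ge0 => j _; rewrite mxE ler0n.
Qed.

End Aux.

Lemma inf_mono (R : realType) (A B : set R) :
  A `<=` B -> A !=set0 -> has_lbound B -> inf B <= inf A.
Proof.
move=> AB neA lbB; apply: lb_le_inf neA _ => z Az; exact: ge_inf lbB _ (AB _ Az).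
Qed.

Theorem corollary1 (R : realType) (m n : nat) (Smin Smax alpha : R)
  (k : 'I_m) (T : rel (Omega m n)) :
  (2 <= m)%N -> (1 <= n)%N -> Smin < Smax -> 0 <= alpha < 1 ->
  total_order T -> monotone_order Smin Smax T ->
  Bstar Smin Smax alpha (Thigh Smin Smax) (constO n k)
    <= Bstar Smin Smax alpha T (constO n k)
  /\ Bstar Smin Smax alpha T (constO n k)
    <= Bstar Smin Smax alpha (Tlow Smin Smax) (constO n k).
Proof.
move=> hm hn hS /andP[a0 a1] Tto Tmon.
have img : forall A B : pred (Omega m n), (forall y, A y -> B y) ->
    [set mean Smin Smax F | F in Fset A alpha] `<=`
    [set mean Smin Smax F | F in Fset B alpha].
  by move=> A B AB z [F hF <-]; exists F => //; exact: (@Fset_mono R m n A B alpha AB F hF).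
have lb : forall A : pred (Omega m n),
    has_lbound [set mean Smin Smax F | F in Fset A alpha].
  by move=> A; exists Smin => z [F hF <-]; exact: (@Fset_lb R m n Smin Smax hm hS A alpha F hF).
have ne : [set mean Smin Smax F | F in
            Fset (OmegaT (Tlow Smin Smax) (constO n k)) alpha] !=set0.
  have [F hF] := @low_nonempty R m n Smin Smax k alpha a1.
  by exists (mean Smin Smax F); exists F.
have s1 := img _ _ (@low_sub R m n Smin Smax hm hS k hn T Tmon).
have s2 := img _ _ (@sub_high R m n Smin Smax hm hS k hn T Tto Tmon).
split; rewrite /Bstar; apply: inf_mono => //.
by case: ne => z /s1 hz; exists z.
Qed.
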